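(* Let $\varepsilon\ge 0$ be real and $p,q$ positive integers with $p/q\ge 2$. For every fractional $(p/q+\varepsilon)$-coloring $c$ of the Kneser graph $K_{p/q}$ there exists a vertex $v$ of $K_{p/q}$ such that the Lebesgue measure of $\bigcup_{u\in N(v)}c(u)$ is at least $p/q-1$, where $N(v)$ is the set of neighbors of $v$.
   Context: For integers $1\le q\le p$, the Kneser graph $K_{p/q}$ has as vertices all $q$-element subsets of $[p]$, two being adjacent iff they are disjoint. A fractional $m$-coloring of a graph (real $m>0$) assigns to each vertex a measurable subset of $[0,m)$ of Lebesgue measure one so that adjacent vertices receive disjoint sets. *)

(* Defs.v *)
From mathcomp Require Import all_boot.
From Stdlib Require Import Reals.

Set Implicit Arguments.
Unset Strict Implicit.
Unset Printing Implicit Defensive.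

Local Open Scope R_scope.

Definition covers (A : R -> Prop) (a b : nat -> R) : Prop :=
  forall x, A x -> exists n : nat, a n <= x < b n.

Definition cover_sum (A : R -> Prop) (s : R) : Prop :=
  exists a b : nat -> R,
    (forall n, a n <= b n) /\ covers A a b /\ infinite_sum (fun n => b n - a n) s.

Definition outer_measure_is (A : R -> Prop) (r : R) : Prop :=
  (exists s, cover_sum A s) /\
  (forall s, cover_sum A s -> r <= s) /\
  (forall r', (forall s, cover_sum A s -> r' <= s) -> r' <= r).

(* Caratheodory measurability (test sets of finite outer measure). *)
Definition lebesgue_measurable (A : R -> Prop) : Prop :=
  forall (E : R -> Prop) (rE : R), outer_measure_is E rE ->
    exists r1 r2, outer_measure_is (fun x => E x /\ A x) r1 /\
                  outer_measure_is (fun x => E x /\ ~ A x) r2 /\ rE = r1 + r2.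

Definition lebesgue_measure_is (A : R -> Prop) (r : R) : Prop :=
  lebesgue_measurable A /\ outer_measure_is A r.

Definition kneser_vertex (p q : nat) (A : {set 'I_p}) : bool := #|A| == q.

Definition kneser_adj (p q : nat) (A B : {set 'I_p}) : bool :=
  [&& kneser_vertex q A, kneser_vertex q B & [disjoint A & B]].

Definition fractional_coloring (p q : nat) (m : R)
    (c : {set 'I_p} -> R -> Prop) : Prop :=
  (forall v, kneser_vertex q v ->
      (forall x, c v x -> 0 <= x < m) /\ lebesgue_measure_is (c v) 1) /\
  (forall u v, kneser_adj q u v -> forall x, ~ (c u x /\ c v x)).

Definition neighbour_union (p q : nat) (c : {set 'I_p} -> R -> Prop)
    (v : {set 'I_p}) : R -> Prop :=
  fun x => exists u, kneser_adj q u v /\ c u x.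

(* Main.v *)
Require Import Defs.
From Stdlib Require Import Reals Lra ClassicalEpsilon FunctionalExtensionality PropExtensionality.
From Stdlib Require List.
Local Open Scope list_scope.
Local Open Scope R_scope.
Local Open Scope R_scope.

Lemma set_ext (A B : R -> Prop) : (forall x, A x <-> B x) -> A = B.
Proof. intro h; apply functional_extensionality; intro x; apply propositional_extensionality; auto. Qed.

Lemma psum_nonneg (f : nat -> R) n : (forall k, 0 <= f k) -> 0 <= sum_f_R0 f n.
Proof. intro h; induction n; simpl; [apply h| specialize (h (S n)); lra]. Qed.

Lemma isum_nonneg (f : nat -> R) s : (forall k, 0 <= f k) -> infinite_sum f s -> 0 <= s.
Proof.
intros h hs. destruct (Rle_or_lt 0 s) as [|hlt]; auto.
destruct (hs (- s)) as [N HN]; [lra|].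
specialize (HN N (le_n N)). unfold R_dist in HN. pose proof (psum_nonneg f N h).
rewrite Rabs_right in HN; lra.
Qed.

Lemma cs_nonneg A s : cover_sum A s -> 0 <= s.
Proof. intros [a [b [hab [_ hs]]]]. apply (isum_nonneg (fun n => b n - a n) s); [intro k; specialize (hab k); lra| exact hs]. Qed.

Lemma om_unique A r r' : outer_measure_is A r -> outer_measure_is A r' -> r = r'.
Proof.
intros [_ [h1 h2]] [_ [h1' h2']]. apply Rle_antisym; [apply h2'; exact h1 | apply h2; exact h1'].
Qed.

Definition om (A : R -> Prop) : R := epsilon (inhabits 0) (fun r => outer_measure_is A r).

Lemma om_eq A r : outer_measure_is A r -> om A = r.
Proof.
intro h. unfold om. apply (om_unique A); [|exact h].
apply (epsilon_spec (inhabits 0) (fun r => outer_measure_is A r)). exists r; exact h.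
Qed.

Lemma om_ge0 A r : outer_measure_is A r -> 0 <= r.
Proof. intros [_ [_ h]]. apply h. intros s hs; exact (cs_nonneg A s hs). Qed.

Lemma cover_sub A B s : cover_sum B s -> (forall x, A x -> B x) -> cover_sum A s.
Proof.
intros [a [b [h1 [h2 h3]]]] hAB. exists a, b. split; [exact h1|split; [|exact h3]].
intros x hx; exact (h2 x (hAB x hx)).
Qed.

Lemma om_exists A : (exists s, cover_sum A s) -> exists r, outer_measure_is A r.
Proof.
intros hne.
pose (F := fun y => exists s, cover_sum A s /\ y = - s).
assert (hb : bound F). { exists 0. intros y [s [hs ->]]. pose proof (cs_nonneg A s hs); lra. }
assert (hF : exists y, F y). { destruct hne as [s hs]. exists (- s), s; auto. }
destruct (completeness F hb hF) as [l [hub hlub]].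
exists (- l). split; [exact hne| split].
- intros s hs. assert (F (- s)) by (exists s; auto). specialize (hub _ H). lra.
- intros r' hr'. assert (l <= - r').
  { apply hlub. intros y [s [hs ->]]. specialize (hr' s hs). lra. }
  lra.
Qed.

Lemma om_empty A : (forall x, ~ A x) -> outer_measure_is A 0.
Proof.
intro h.
assert (hc : cover_sum A 0).
{ exists (fun _ => 0), (fun _ => 0). split; [intro; lra| split].
  - intros x hx; exfalso; exact (h x hx).
  - intros e he. exists 0%nat. intros n _. unfold R_dist.
    assert (sum_f_R0 (fun _ : nat => 0 - 0) n = 0).
    { induction n; simpl; lra. }
    rewrite H, Rminus_0_r, Rabs_R0; exact he. }
destruct (om_exists A (ex_intro _ 0 hc)) as [r hr].
pose proof (om_ge0 A r hr). destruct hr as [h1 [h2 h3]].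
pose proof (h2 0 hc). replace 0 with r by lra. split; [exact h1|split; assumption].
Qed.

Lemma cover_interval m : 0 < m -> cover_sum (fun x => 0 <= x < m) m.
Proof.
intro hm. exists (fun _ => 0), (fun n => match n with O => m | S _ => 0 end).
split; [intros [|n]; lra| split].
- intros x hx. exists 0%nat. exact hx.
- intros e he. exists 0%nat. intros n _. unfold R_dist.
  assert (sum_f_R0 (fun n => match n with O => m | S _ => 0 end - 0) n = m).
  { induction n; simpl; [lra| rewrite IHn; lra]. }
  rewrite H. replace (m - m) with 0 by lra. rewrite Rabs_R0; exact he.
Qed.

Definition sumL {T : Type} (f : T -> R) (l : list T) : R :=
  List.fold_right (fun a s => f a + s) 0 l.

Lemma sumL_app {T} (f : T -> R) l1 l2 : sumL f (l1 ++ l2) = sumL f l1 + sumL f l2.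
Proof. induction l1; simpl; [lra| rewrite IHl1; lra]. Qed.

Lemma sumL_map {T U} (f : U -> R) (g : T -> U) l : sumL f (List.map g l) = sumL (fun x => f (g x)) l.
Proof. induction l; simpl; [lra| rewrite IHl; lra]. Qed.

Lemma sumL_ext {T} (f g : T -> R) l : (forall x, List.In x l -> f x = g x) -> sumL f l = sumL g l.
Proof. induction l; simpl; intros h; [lra|]. rewrite (h a (or_introl eq_refl)), IHl; auto. Qed.

Lemma sumL_le {T} (f g : T -> R) l : (forall x, List.In x l -> f x <= g x) -> sumL f l <= sumL g l.
Proof. induction l; simpl; intros h; [lra|]. pose proof (h a (or_introl eq_refl)).
  assert (sumL f l <= sumL g l) by auto. lra. Qed.

Lemma sumL_plus {T} (f g : T -> R) l : sumL (fun x => f x + g x) l = sumL f l + sumL g l.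
Proof. induction l; simpl; [lra| rewrite IHl; lra]. Qed.

Lemma sumL_scal {T} (c : R) (f : T -> R) l : sumL (fun x => c * f x) l = c * sumL f l.
Proof. induction l; simpl; [lra| rewrite IHl; lra]. Qed.

Lemma sumL_const {T} (c : R) (l : list T) : sumL (fun _ => c) l = c * INR (length l).
Proof. induction l; simpl length; [simpl; lra| rewrite S_INR; simpl; fold (sumL (fun _ : T => c) l); rewrite IHl; lra]. Qed.

Lemma sumL_swap {T U} (f : T -> U -> R) l1 l2 :
  sumL (fun x => sumL (fun y => f x y) l2) l1 = sumL (fun y => sumL (fun x => f x y) l1) l2.
Proof.
induction l1; simpl.
- induction l2; simpl; [lra| rewrite <- IHl2; lra].
- rewrite IHl1. rewrite <- sumL_plus. reflexivity.
Qed.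

Lemma sumL_neg_exists {T} (f : T -> R) l : l <> nil -> 0 <= sumL f l -> exists x, List.In x l /\ 0 <= f x.
Proof.
intros hl hs. destruct (classic (exists x, List.In x l /\ 0 <= f x)) as [|hn]; auto.
exfalso. assert (forall x, List.In x l -> f x < 0).
{ intros x hx. destruct (Rle_or_lt 0 (f x)); auto. exfalso; apply hn; eauto. }
destruct l as [|a l]; [congruence|]. simpl in hs.
assert (sumL f l <= 0).
{ apply Rle_trans with (sumL (fun _ => 0) l).
  - apply sumL_le. intros x hx. left; apply H; simpl; auto.
  - rewrite sumL_const; lra. }
pose proof (H a (or_introl eq_refl)). lra.
Qed.

Fixpoint allvecs (n : nat) : list (list bool) :=
  match n with O => nil :: nil
  | S n => List.map (cons true) (allvecs n) ++ List.map (cons false) (allvecs n) end.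

Fixpoint atom (C : nat -> R -> Prop) (bs : list bool) (x : R) : Prop :=
  match bs with nil => True
  | b :: bs => (b = true <-> C O x) /\ atom (fun n => C (S n)) bs x end.

Lemma allvecs_len n bs : List.In bs (allvecs n) -> length bs = n.
Proof.
revert bs; induction n; simpl; intros bs h.
- destruct h as [<-|[]]; reflexivity.
- apply List.in_app_or in h. destruct h as [h|h]; apply List.in_map_iff in h; destruct h as [b [<- hb]];
  simpl; f_equal; auto.
Qed.

Lemma atom_nth C bs x i : atom C bs x -> (i < length bs)%nat -> (List.nth i bs false = true <-> C i x).
Proof.
revert C i; induction bs as [|b bs IH]; simpl; intros C i ha hi; [exfalso; apply (Nat.nlt_0_r _ hi)|].
destruct ha as [h0 ha]. destruct i as [|i]; [exact h0|].
apply (IH (fun n => C (S n)) i ha). apply Nat.succ_lt_mono; exact hi.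
Qed.

Lemma split_atoms n : forall C, (forall i, lebesgue_measurable (C i)) ->
  forall E rE, outer_measure_is E rE ->
  rE = sumL (fun bs => om (fun x => E x /\ atom C bs x)) (allvecs n).
Proof.
induction n; intros C hC E rE hE; simpl.
- rewrite Rplus_0_r. symmetry. apply om_eq.
  replace (fun x => E x /\ True) with E; [exact hE|].
  apply set_ext; intuition.
- rewrite sumL_app, !sumL_map.
  destruct (hC O E rE hE) as [r1 [r2 [h1 [h2 ->]]]].
  assert (hC' : forall i, lebesgue_measurable (C (S i))) by (intro; apply hC).
  rewrite (IHn _ hC' _ _ h1), (IHn _ hC' _ _ h2).
  f_equal; apply sumL_ext; intros bs _; f_equal; apply set_ext; intro x; simpl.
  + intuition.
  + intuition discriminate.
Qed.

From mathcomp Require Import all_boot zify.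
Local Close Scope R_scope.
Local Open Scope nat_scope.
Set Implicit Arguments. Unset Strict Implicit. Unset Printing Implicit Defensive.

Lemma disjointP (T : finType) (A B : {set T}) :
  reflect (forall x, x \in A -> x \in B -> False) [disjoint A & B].
Proof.
rewrite -setI_eq0; apply: (iffP eqP) => [h x ha hb | h].
- have : x \in A :&: B by rewrite inE ha hb.
  by rewrite h inE.
- apply/setP => x; rewrite !inE; apply/negP => /andP[]; exact: h.
Qed.

Lemma arith (p q k c m : nat) : 2*q <= p -> m + c = p -> c + k <= q + q -> k <= c -> p * k <= q * (m + k).
Proof.
move=> h1 h2 h3 h4.
have hk : k <= q by lia.
have h5 : q * (p - 2*q + 2*k) <= q * (m + k) by apply: leq_mul; lia.
have h6 : p * k <= q * (p - 2*q + 2*k).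
  have : k * (p - 2 * q) <= q * (p - 2*q) by apply: leq_mul; lia.
  nia.
lia.
Qed.

Section Comb.
Variables p q : nat.
Hypothesis hq : 0 < q.
Hypothesis hpq : 2 * q <= p.

Definition dd (x y : nat) : nat := if x <= y then y - x else y + p - x.
Definition elt (x t : nat) : nat := if x + t < p then x + t else x + t - p.

Ltac splitifs := repeat match goal with
 | |- context [if ?b then _ else _] =>
     lazymatch b with context [if _ then _ else _] => fail | _ =>
       let H := fresh "Hif" in case H : b end
 end.

Lemma elt_lt x t : x < p -> t < p -> elt x t < p.
Proof. rewrite /elt; splitifs; lia. Qed.

Definition shift (s : nat) (hs : s < p) (j : 'I_p) : 'I_p :=
  Ordinal (elt_lt (ltn_ord j) hs).

Definition karc (i : 'I_p) : {set 'I_p} := [set j : 'I_p | dd i j < q].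

Lemma q_lt_p : q < p. Proof. lia. Qed.

Lemma card_karc i : #|karc i| = q.
Proof.
have hf : forall t : 'I_q, elt i t < p.
  move=> t; apply: elt_lt => //; have := ltn_ord t; lia.
pose f (t : 'I_q) : 'I_p := Ordinal (hf t).
have -> : karc i = [set f t | t in [set: 'I_q]].
  apply/setP => j; rewrite inE; apply/idP/imsetP.
  - move=> hj. have hj' : dd i j < q by [].
    exists (Ordinal hj'); first by rewrite inE.
    apply/val_inj => /=. move: hj'. have := ltn_ord i; have := ltn_ord j.
    rewrite /elt /dd; splitifs; lia.
  - case=> t _ ->. rewrite /dd /f /= /elt. have := ltn_ord i; have := ltn_ord t.
    splitifs; lia.
rewrite card_in_imset ?cardsT ?card_ord //.
move=> t1 t2 _ _ /(congr1 val) /=. have := ltn_ord i; have := ltn_ord t1; have := ltn_ord t2.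
rewrite /elt; splitifs => *; apply/val_inj => /=; lia.
Qed.

Lemma karc_disj (i k : 'I_p) : q <= dd i k <= p - q -> [disjoint karc i & karc k].
Proof.
move=> h; apply/disjointP => j; rewrite !inE.
move: h; have := ltn_ord i; have := ltn_ord j; have := ltn_ord k.
rewrite /dd; splitifs; lia.
Qed.

Lemma karc_meet (i k : 'I_p) : [disjoint karc i & karc k] -> q <= dd i k <= p - q.
Proof.
move=> /disjointP h.
case: (leqP q (dd i k)) => h1.
  case: (leqP (dd i k) (p - q)) => h2 //.
  exfalso; apply: (h i); rewrite !inE.
    move: h1 h2; have := ltn_ord i; have := ltn_ord k; rewrite /dd; splitifs; lia.
  move: h1 h2; have := ltn_ord i; have := ltn_ord k; rewrite /dd; splitifs; lia.
exfalso; apply: (h k); rewrite !inE.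
  by [].
move: h1; have := ltn_ord i; have := ltn_ord k; rewrite /dd; splitifs; lia.
Qed.

Lemma katona (K : {set 'I_p}) :
  (forall i k, i \in K -> k \in K -> ~~ [disjoint karc i & karc k]) ->
  p * #|K| <= q * (#|[set i | [exists k in K, [disjoint karc k & karc i]]]| + #|K|).
Proof.
move=> hK.
set M := [set i | _].
case: (set_0Vmem K) => [->|[k0 hk0]]; first by rewrite cards0; lia.
pose C := ~: M.
have hMC : #|M| + #|C| = p by rewrite /C cardsC card_ord.
have hKC : K \subset C.
  apply/subsetP => j hj; rewrite !inE negb_exists; apply/forallP => k.
  by apply/negP => /andP [hk hd]; move: (hK k j hk hj); rewrite hd.
have hpq1 : p - q < p by lia.
pose k1 := shift hpq1 k0.
pose S := karc k0 :|: karc k1.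
have hS : #|S| = q + q.
  rewrite cardsU !card_karc.
  have -> : karc k0 :&: karc k1 = set0.
    apply/disjoint_setI0/karc_disj.
    have := ltn_ord k0. rewrite /k1 /= /dd /elt; splitifs; lia.
  by rewrite cards0; lia.
have hq1 : q < p by lia.
pose h2 (j : 'I_p) : 'I_p := if dd k0 j < q then shift hpq1 j else shift hq1 j.
have vh2 j : val (h2 j) = if dd k0 j < q then elt j (p - q) else elt j q.
  by rewrite /h2; case: ifP.
have inC j : j \in C -> dd k0 j < q \/ p - q < dd k0 j.
  rewrite !inE negb_exists => /forallP /(_ k0); rewrite hk0 /= => hd.
  case: (leqP q (dd k0 j)) => h1; last by left.
  case: (leqP (dd k0 j) (p - q)) => h3; last by right.
  by rewrite karc_disj ?h1 ?h3 in hd.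
have hCS : C \subset S.
  apply/subsetP => j /inC hj; rewrite !inE.
  move: hj; have := ltn_ord k0; have := ltn_ord j; rewrite /k1 /= /dd /elt.
  splitifs; lia.
have hinj : {in K &, injective h2}.
  move=> j1 j2 /(subsetP hKC) /inC c1 /(subsetP hKC) /inC c2.
  move=> /(congr1 val); rewrite !vh2 => e; apply/val_inj; move: e c1 c2.
  have := ltn_ord k0; have := ltn_ord j1; have := ltn_ord j2.
  rewrite /= /dd /elt; splitifs; lia.
have hhM : [set h2 j | j in K] \subset M.
  apply/subsetP => x /imsetP [j hj ->]; rewrite inE; apply/existsP; exists j.
  rewrite hj /=; apply: karc_disj.
  have := (subsetP hKC _ hj) => /inC.
  have := ltn_ord k0; have := ltn_ord j; rewrite /= vh2 /dd /elt; splitifs; lia.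
have hhS : [set h2 j | j in K] \subset S.
  apply/subsetP => x /imsetP [j hj ->].
  have := (subsetP hKC _ hj) => /inC. rewrite !inE.
  have := ltn_ord k0; have := ltn_ord j; rewrite /k1 /= vh2 /dd /elt; splitifs; lia.
have hU : #|C| + #|K| <= q + q.
  rewrite -(card_in_imset hinj) -hS.
  have -> : #|C| + #|[set h2 j | j in K]| = #|C :|: [set h2 j | j in K]|.
    rewrite cardsU.
    have -> : C :&: [set h2 j | j in K] = set0.
      apply/setP => x; rewrite in_set0; apply/negP; rewrite inE => /andP [hx1 hx2].
      by move: hx1; rewrite /C in_setC (subsetP hhM x hx2).
    rewrite cards0; lia.
  by apply: subset_leq_card; rewrite subUset hCS hhS.
have hKle := subset_leq_card hKC.
exact: arith hpq hMC hU hKle.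
Qed.

End Comb.

From mathcomp Require Import all_boot zify.
Set Implicit Arguments. Unset Strict Implicit. Unset Printing Implicit Defensive.

Definition rind (b : bool) : R := if b then R1 else R0.

Lemma sumL_ind_count (T : Type) (a : pred T) (s : seq T) :
  sumL (fun x => rind (a x)) s = INR (count a s).
Proof.
elim: s => [|x s IH] /=; first by [].
rewrite /sumL /= -/(sumL _ _) IH /rind plus_INR; case: (a x) => /=; lra.
Qed.

Lemma sumL_ind_card (n : nat) (A : {set 'I_n}) :
  sumL (fun i => rind (i \in A)) (enum 'I_n) = INR #|A|.
Proof.
rewrite (sumL_ind_count (fun i => i \in A)) cardE /enum_mem size_filter; congr INR.
rewrite count_filter; apply: eq_count => x; rewrite /= andbT //.
Qed.

Lemma enum_ne_nil (n : nat) : enum 'I_n.+1 <> [::].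
Proof. move=> h; have := mem_enum 'I_n.+1 ord0; rewrite h in_nil inE. by []. Qed.
From Stdlib Require Import Reals.

Lemma INR_le (a b : nat) : (a <= b)%N -> (INR a <= INR b)%R.
Proof. move/leP; apply: le_INR. Qed.

Theorem mainTheorem8 (eps : R) (p q : nat) :
  (0 <= eps)%R -> (0 < q)%N -> (2 * q <= p)%N ->
  forall c : {set 'I_p} -> R -> Prop,
    fractional_coloring q (INR p / INR q + eps)%R c ->
    exists v : {set 'I_p}, kneser_vertex q v /\
      exists r : R, outer_measure_is (neighbour_union q c v) r /\
                    (INR p / INR q - 1 <= r)%R.
Proof.
move=> heps hq hpq c [hcol hadj].
destruct p as [|p']; first by exfalso; lia.
set P := p'.+1.
have hqR : (0 < INR q)%R by apply: lt_0_INR; apply/ltP.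
have hPR : (0 < INR P)%R by apply: lt_0_INR; apply/ltP.
set m := (INR P / INR q + eps)%R.
have hm : (0 < m)%R.
  have : (0 < INR P / INR q)%R by apply: Rdiv_lt_0_compat.
  rewrite /m; lra.
pose E0 := fun x => (0 <= x < m)%R.
have hE0 : cover_sum E0 m := cover_interval m hm.
have hvert : forall i : 'I_P, kneser_vertex q (karc q i).
  by move=> i; rewrite /kneser_vertex (card_karc hq hpq).
have hcE0 : forall i : 'I_P, forall x, c (karc q i) x -> E0 x.
  by move=> i x hx; exact: ((hcol _ (hvert i)).1 x hx).
pose C := fun n : nat => c (karc q (inord n : 'I_P)).
have hCm : forall n, lebesgue_measurable (C n).
  by move=> n; exact: (hcol _ (hvert _)).2.1.
have hsub : forall A : R -> Prop, (forall x, A x -> E0 x) -> exists r, outer_measure_is A r.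
  by move=> A hA; apply: om_exists; exists m; exact: cover_sub _ _ _ hE0 hA.
have omge0 : forall A : R -> Prop, (forall x, A x -> E0 x) -> (0 <= om A)%R.
  move=> A hA; have [r hr] := hsub A hA; rewrite (om_eq _ _ hr); exact: om_ge0 _ _ hr.
pose a := fun bs => om (fun x => E0 x /\ atom C bs x).
pose K := fun bs : list bool => [set i : 'I_P | List.nth i bs false].
pose M := fun bs => [set i : 'I_P | [exists k in K bs, [disjoint karc q k & karc q i]]].
have hatom : forall bs, List.In bs (allvecs P) -> forall x (i : 'I_P),
    atom C bs x -> (i \in K bs) <-> c (karc q i) x.
  move=> bs hbs x i hx; rewrite inE.
  have := atom_nth C bs x i hx; rewrite (allvecs_len _ _ hbs) /C inord_val.
  move=> h; apply: h; apply/ltP; exact: ltn_ord.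
have claim1 : forall i : 'I_P, 1%R = sumL (fun bs => Rmult (rind (i \in K bs)) (a bs)) (allvecs P).
  move=> i.
  have hci : outer_measure_is (c (karc q i)) 1 := (hcol _ (hvert i)).2.2.
  rewrite {1}(split_atoms P C hCm _ _ hci); apply: sumL_ext => bs hbs.
  case hb : (i \in K bs); rewrite /rind.
  - rewrite Rmult_1_l /a; congr om; apply: set_ext => x; split.
    + by move=> [hx ha]; split => //; exact: hcE0 hx.
    + by move=> [hx ha]; split => //; apply/(hatom _ hbs x i ha).
  - rewrite Rmult_0_l; apply: om_eq; apply: om_empty => x [hx ha].
    by move: hb; move/(hatom _ hbs x i ha): hx => ->.
have hNU : forall i : 'I_P, forall x, neighbour_union q c (karc q i) x -> E0 x.
  move=> i x [u [hu hx]]; move: hu; rewrite /kneser_adj => /andP [hu _].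
  exact: ((hcol _ hu).1 x hx).
have claim2 : forall i : 'I_P,
    (sumL (fun bs => Rmult (rind (i \in M bs)) (a bs)) (allvecs P) <= om (neighbour_union q c (karc q i)))%R.
  move=> i.
  have [r hr] := hsub _ (hNU i).
  rewrite (om_eq _ _ hr) (split_atoms P C hCm _ _ hr); apply: sumL_le => bs hbs.
  case hb : (i \in M bs); rewrite /rind.
  - rewrite Rmult_1_l /a; right; congr om; apply: set_ext => x; split.
    + move=> [hx ha]; split => //.
      move: hb; rewrite inE => /existsP [k /andP [hk hd]].
      exists (karc q k); split; last by apply/(hatom _ hbs x k ha).
      by rewrite /kneser_adj !hvert.
    + by move=> [hx ha]; split => //; exact: hNU hx.
  - rewrite Rmult_0_l; apply: omge0 => x [hx _]; exact: hNU hx.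
have claim3 : forall bs, List.In bs (allvecs P) ->
    (0 <= a bs * (INR q * INR #|M bs| + INR q * INR #|K bs| - INR P * INR #|K bs|))%R.
  move=> bs hbs.
  have ha0 : (0 <= a bs)%R by apply: omge0 => x [].
  case: (boolP [exists i, exists k, [&& i \in K bs, k \in K bs & [disjoint karc q i & karc q k]]]).
  - move=> /existsP [i /existsP [k /and3P [hi hk hd]]].
    have -> : a bs = 0%R.
      apply: om_eq; apply: om_empty => x [hx ha].
      apply: (hadj (karc q i) (karc q k)); first by rewrite /kneser_adj !hvert.
      by split; [apply/(hatom _ hbs x i ha) | apply/(hatom _ hbs x k ha)].
    lra.
  - move=> hn.
    have hK : forall i k, i \in K bs -> k \in K bs -> ~~ [disjoint karc q i & karc q k].
      move=> i k hi hk; apply/negP => hd; move/negP: hn; apply.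
      by apply/existsP; exists i; apply/existsP; exists k; rewrite hi hk hd.
    have := katona hq hpq hK.
    rewrite -/(M bs) => /INR_le; rewrite !mult_INR plus_INR => h.
    rewrite -/P Rmult_plus_distr_l in h; apply: Rmult_le_pos => //. move: h; set X := (INR q * _ + _)%R => h; apply: Rge_le; apply: Rge_minus; apply: Rle_ge; exact: h.
have hsum : (0 <= sumL (fun i => INR q * om (neighbour_union q c (karc q i)) + INR q - INR P)
                  (enum 'I_P))%R.
  apply: Rle_trans; last first.
    apply: sumL_le => i _.
    have h1 := claim1 i; have h2 := claim2 i.
    have : (INR q * sumL (fun bs => Rmult (rind (i \in M bs)) (a bs)) (allvecs P)
            + (INR q - INR P) * sumL (fun bs => Rmult (rind (i \in K bs)) (a bs)) (allvecs P)
            <= INR q * om (neighbour_union q c (karc q i)) + INR q - INR P)%R.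
      rewrite -h1; have := Rmult_le_compat_l _ _ _ (Rlt_le _ _ hqR) h2. rewrite /P; lra.
    by apply.
  have e : forall i : 'I_P, List.In i (enum 'I_P) ->
     (INR q * sumL (fun bs => Rmult (rind (i \in M bs)) (a bs)) (allvecs P)
      + (INR q - INR P) * sumL (fun bs => Rmult (rind (i \in K bs)) (a bs)) (allvecs P))%R
     = sumL (fun bs => a bs * (INR q * rind (i \in M bs) + (INR q - INR P) * rind (i \in K bs)))%R
         (allvecs P).
    move=> i _; rewrite -!sumL_scal -sumL_plus; apply: sumL_ext => bs _; ring.
  rewrite (sumL_ext _ _ _ e) sumL_swap.
  apply: (Rle_trans _ (sumL (fun _ => 0%R) (allvecs P))).
    by rewrite sumL_const; lra.
  apply: sumL_le => bs hbs.
  rewrite sumL_scal sumL_plus !sumL_scal !sumL_ind_card.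
  apply: (Rle_trans _ _ _ (claim3 bs hbs)); right; move: (a bs) (INR #|M bs|) (INR #|K bs|) (INR P) (INR q) => x1 x2 x3 x4 x5; ring.
have [i [_ hi]] := sumL_neg_exists _ _ (@enum_ne_nil p') hsum.
exists (karc q i); split; first exact: hvert.
have [r hr] := hsub _ (hNU i).
exists r; split => //.
rewrite (om_eq _ _ hr) in hi.
apply: (Rmult_le_reg_l (INR q)) => //.
rewrite Rmult_minus_distr_l Rmult_1_r.
have -> : (INR q * (INR P / INR q) = INR P)%R by field; lra.
lra.
Qed.
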